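(* Let $M$ be a loopless binary matroid on an $n$-element ground set $S$, of rank $r$. 1. If the ground set $S$ is colored with exactly $r$ colors (every color being used), then $M$ contains a rainbow colored circuit or a monochromatic cut. 2. If the ground set $S$ is colored with exactly $n-r$ colors (every color being used), then $M$ contains a rainbow colored cut or a monochromatic circuit.
   Context: A coloring of $S$ is a partition of $S$ into nonempty color classes. A subset of $S$ is rainbow colored if no two of its elements have the same color, and monochromatic if all its elements have the same color. A cut of a matroid is an inclusionwise minimal subset of the ground set intersecting every basis (equivalently, a circuit of the dual matroid). A matroid is binary if it is representable over $GF(2)$. *)

(* Defs.v *)
From HB Require Import structures.
From mathcomp Require Import all_boot all_order all_algebra.
Set Implicit Arguments. Unset Strict Implicit. Unset Printing Implicit Defensive.
Import GRing.Theory.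

Record matroid (S : finType) := Matroid {
  indep : {set S} -> bool;
  indep0 : indep set0;
  indep_sub : forall A B : {set S}, A \subset B -> indep B -> indep A;
  indep_exchange : forall A B : {set S}, indep A -> indep B -> #|A| < #|B| ->
    exists2 x, x \in B :\: A & indep (x |: A)
}.

Section MatroidNotions.
Variables (S : finType) (M : matroid S).

Definition basis (B : {set S}) : bool := maxset (indep M) B.

Definition circuit (C : {set S}) : bool := minset (fun X => ~~ indep M X) C.

Definition meets_all_bases (X : {set S}) : bool :=
  [forall B : {set S}, basis B ==> (X :&: B != set0)].
Definition cut (X : {set S}) : bool := minset meets_all_bases X.

Definition mrank : nat := \max_(A : {set S} | indep M A) #|A|.

Definition loopless : Prop := forall x : S, indep M [set x].

(* binary: representable over GF(2): there is a family of vectors v_x in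
   GF(2)^m such that A is independent iff (v_x)_{x in A} is linearly
   independent (as a family, so repeated vectors count as dependent). *)
Definition binary : Prop :=
  exists (m : nat) (v : S -> 'rV['F_2]_m),
    forall A : {set S}, indep M A = free [seq v x | x in A].
End MatroidNotions.

(* A coloring with exactly k colors (all used): a surjection S -> 'I_k;
   color classes are the fibres. *)
Definition coloring (S : finType) (k : nat) (c : S -> 'I_k) : Prop :=
  forall i : 'I_k, exists x : S, c x = i.

Definition rainbow (S : finType) (k : nat) (c : S -> 'I_k) (A : {set S}) : Prop :=
  {in A &, injective c}.

Definition monochromatic (S : finType) (k : nat) (c : S -> 'I_k) (A : {set S}) : Prop :=
  {in A &, forall x y, c x = c y}.

(* Main.v *)
Require Import Defs.
From mathcomp Require Import all_boot all_order all_algebra.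
From Stdlib Require Import Classical_Prop.
From mathcomp Require Import zify.
Set Implicit Arguments. Unset Strict Implicit. Unset Printing Implicit Defensive.
Import GRing.Theory.

Section Mat.
Variables (S : finType) (M : matroid S).

Lemma indep_le_rank A : indep M A -> #|A| <= mrank M.
Proof. move=> iA; exact: (@leq_bigmax_cond _ (indep M) (fun A => #|A|)). Qed.

Lemma rank_witness : exists2 A, indep M A & #|A| = mrank M.
Proof.
have : 0 < #|indep M|.
  apply/card_gt0P; exists set0; exact: indep0.
move=> /(@eq_bigmax_cond _ (indep M) (fun A : {set S} => #|A|)) [A iA eA].
by exists A.
Qed.

Lemma maxsize_basis A : indep M A -> #|A| = mrank M -> basis M A.
Proof.
move=> iA hA; apply/maxsetP; split=> // B iB sAB.
apply/eqP; rewrite eq_sym eqEcard sAB /= hA; exact: indep_le_rank.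
Qed.

Lemma basis_size B : basis M B -> #|B| = mrank M.
Proof.
move=> bB; apply/eqP; rewrite eqn_leq indep_le_rank ?(maxsetp bB) //=.
have [A iA eA] := rank_witness.
rewrite -eA leqNgt; apply/negP => lt.
have [x /setDP [xA xB] ixB] := indep_exchange (maxsetp bB) iA lt.
have := maxsetsup bB ixB (subsetUr _ _) => /setP /(_ x).
by rewrite in_setU1 eqxx (negPf xB).
Qed.

Lemma mrank_le_card : mrank M <= #|S|.
Proof. have [A iA <-] := rank_witness; exact: max_card. Qed.

End Mat.

Local Open Scope ring_scope.

Lemma F2_neq0 (x : 'F_2) : x != 0 -> x = 1.
Proof. by case: x => [[|[|n]] //= Hn] _; apply: val_inj. Qed.
Lemma F2_add11 : (1 + 1 : 'F_2) = 0.
Proof. by apply/eqP. Qed.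
Lemma F2_opp (x : 'F_2) : - x = x.
Proof. by case: x => [[|[|n]] //= Hn]; apply: val_inj. Qed.
Lemma F2_10 : (1 : 'F_2) != 0. Proof. by []. Qed.

Section Lin.
Variables (S : finType) (m : nat) (v : S -> 'rV['F_2]_m) (M : matroid S).
Hypothesis hv : forall A : {set S}, indep M A = free [seq v x | x in A].

Definition comb (k : S -> 'F_2) := \sum_(x : S) k x *: v x.
Definition supp (A : {set S}) (k : S -> 'F_2) := forall x, x \notin A -> k x = 0.

Lemma free_coef A k : indep M A -> supp A k -> comb k = 0 -> forall x, k x = 0.
Proof.
rewrite hv => fr sk ck x.
case: (boolP (x \in A)) => [xA|]; last exact: sk.
have /freeP H := fr.
have E : \sum_(i < #|A|) k (enum_val i) *: (image_tuple [eta v] A)`_i = comb k.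
  have -> : comb k = \sum_(y in A) k y *: v y.
    rewrite /comb [LHS](bigID (mem A)) /=.
    by rewrite [X in _ + X = _]big1 ?addr0 // => y /sk ->; rewrite scale0r.
  rewrite [RHS]big_enum_val; apply: eq_bigr => i _ /=.
  by rewrite (nth_map (enum_default i)) // -cardE ltn_ord.
rewrite ck in E.
have := H _ E (enum_rank_in xA x) => /=.
by rewrite enum_rankK_in.
Qed.

Lemma comb_sub k1 k2 : comb k1 - comb k2 = comb (fun x => k1 x - k2 x).
Proof. by rewrite /comb -sumrB; apply: eq_bigr => x _; rewrite scalerBl. Qed.

Lemma coef_uniq A k1 k2 : indep M A -> supp A k1 -> supp A k2 -> comb k1 = comb k2 ->
  forall x, k1 x = k2 x.
Proof.
move=> iA s1 s2 e x; apply/eqP; rewrite -subr_eq0; apply/eqP.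
apply: (free_coef (k := fun x => k1 x - k2 x) iA) => [y yA|].
  by rewrite s1 // s2 // subr0.
by rewrite -comb_sub e subrr.
Qed.

Lemma span_coef_seq (s : seq S) w : w \in <<map v s>>%VS ->
  exists k : S -> 'F_2, (forall x, x \notin s -> k x = 0) /\ w = comb k.
Proof.
elim: s w => [|y s IH] w /=.
  rewrite span_nil memv0 => /eqP ->; exists (fun _ => 0); split=> //.
  by rewrite /comb big1 // => x _; rewrite scale0r.
rewrite span_cons => /memv_addP [a /vlineP [al ->]] [b /IH [k [sk ->]] ->].
exists (fun x => (k x + (x == y)%:R * al : 'F_2)); split.
  move=> x; rewrite in_cons negb_or => /andP [/negPf -> xs].
  by rewrite sk // mul0r addr0.
rewrite /comb; under [RHS]eq_bigr => x _ do rewrite scalerDl.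
rewrite big_split /= addrC; congr (_ + _).
rewrite (bigD1 y) //= eqxx mul1r big1 ?addr0 // => x /negPf ->.
by rewrite mul0r scale0r.
Qed.

Lemma span_coef (A : {set S}) w : w \in <<[seq v x | x in A]>>%VS ->
  exists k : S -> 'F_2, supp A k /\ w = comb k.
Proof.
move=> /span_coef_seq [k [sk ->]]; exists k; split=> // x xA.
by apply: sk; rewrite mem_enum.
Qed.

Lemma comb_delta y : comb (fun x => (x == y)%:R) = v y.
Proof.
rewrite /comb (bigD1 y) //= eqxx scale1r big1 ?addr0 // => x /negPf ->.
by rewrite scale0r.
Qed.

Lemma comb_sum (I : finType) (P : pred I) (k : I -> S -> 'F_2) :
  \sum_(i | P i) comb (k i) = comb (fun x => \sum_(i | P i) k i x).
Proof.
rewrite /comb exchange_big /=; apply: eq_bigr => x _.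
by rewrite scaler_suml.
Qed.

Lemma comb_scale (a : S -> 'F_2) (k : S -> S -> 'F_2) :
  \sum_y a y *: comb (k y) = comb (fun x => \sum_y a y * k y x).
Proof.
rewrite /comb; under eq_bigr => y _ do rewrite scaler_sumr.
rewrite exchange_big /=; apply: eq_bigr => x _.
by rewrite scaler_suml; apply: eq_bigr => y _; rewrite scalerA.
Qed.

Lemma comb_ext k1 k2 : k1 =1 k2 -> comb k1 = comb k2.
Proof. by move=> e; apply: eq_bigr => x _; rewrite e. Qed.

Definition coef (A : {set S}) (w : 'rV['F_2]_m) : S -> 'F_2 := fun x =>
  (odflt [ffun _ => 0] [pick k : {ffun S -> 'F_2} |
     [forall y, (y \notin A) ==> (k y == 0)] && (w == comb k)]) x.

Lemma coefP A w : (exists k, supp A k /\ w = comb k) ->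
  supp A (coef A w) /\ w = comb (coef A w).
Proof.
move=> [k [sk ek]]; rewrite /coef; case: pickP => [k' /andP [/forallP H /eqP E] | H] /=.
  split=> // x xA; by have /implyP /(_ xA) /eqP := H x.
have := H [ffun x => k x]; rewrite /=.
have -> : comb [ffun x => k x] = comb k by apply: comb_ext => x; rewrite ffunE.
rewrite -ek eqxx andbT => /negP; case; apply/forallP => x; apply/implyP => xA.
by rewrite ffunE sk.
Qed.

Lemma basis_span B : basis M B -> forall x, v x \in <<[seq v y | y in B]>>%VS.
Proof.
move=> bB x; case: (boolP (v x \in _)) => // nx; exfalso.
have xB : x \notin B.
  apply/negP => xB; move/negP: nx; apply; apply: memv_span; apply: map_f; by rewrite mem_enum.
have ind : indep M (x |: B).
  rewrite hv; have ->: free [seq v y | y in x |: B] = free (v x :: [seq v y | y in B]).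
    apply: perm_free; change (perm_eq (map v (enum (x |: B))) (map v (x :: enum B))).
    apply: perm_map; apply: uniq_perm; first exact: enum_uniq.
      by rewrite /= mem_enum xB enum_uniq.
    by move=> y; rewrite mem_enum in_setU1 in_cons mem_enum.
  rewrite free_cons nx /=; by move: bB => /maxsetp; rewrite hv.
have := maxsetsup bB ind (subsetUr _ _) => /setP /(_ x).
by rewrite in_setU1 eqxx (negPf xB).
Qed.

Lemma basis_coef B x : basis M B ->
  supp B (coef B (v x)) /\ v x = comb (coef B (v x)).
Proof. move=> bB; apply: coefP; apply: span_coef; exact: basis_span. Qed.

End Lin.

Section Core.
Variables (k : nat) (S : finType) (c : S -> 'I_k) (lam : 'I_k -> S -> 'F_2) (t : 'I_k -> S).
Hypothesis ct : forall a, c (t a) = a.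
Hypothesis H1 : forall y, lam (c y) y = 1.
Hypothesis H2 : forall (Y : {set 'I_k}) (e : 'I_k -> S), Y != set0 -> (forall a, c (e a) = a) ->
  (forall b, b \in Y -> \sum_(a in Y) lam b (e a) = 0) ->
  (forall a, a \in Y -> \sum_(b in Y) lam b (e a) = 0) -> False.

Definition R a b := (a != b) && [exists y, (c y == a) && (lam b y != 0)].

Lemma two_ones (X : {set 'I_k}) (g : 'I_k -> 'F_2) z0 z1 : z0 \in X -> z1 \in X ->
  z0 != z1 -> g z0 = 1 -> g z1 = 1 ->
  (forall z, z \in X -> z != z0 -> z != z1 -> g z = 0) -> \sum_(z in X) g z = 0.
Proof.
move=> z0X z1X ne g0 g1 go.
rewrite (bigD1 z0) //= (bigD1 z1) /=; last by rewrite z1X eq_sym.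
rewrite big1 ?addr0 ?g0 ?g1 ?F2_add11 // => z /andP [/andP [zX zz0] zz1].
exact: go.
Qed.

Lemma no_cycle n : forall (X : {set 'I_k}) (q : 'I_k -> 'I_k), (#|X| <= n)%N -> X != set0 ->
  (forall b, b \in X -> (q b \in X) && R (q b) b) -> False.
Proof.
elim: n => [|n IH] X q.
  by rewrite leqn0 cards_eq0 => /eqP ->; rewrite eqxx.
move=> hX nX hq.
case: (boolP (#|q @: X| == #|X|)) => [/imset_injP inj | ninj]; last first.
  apply: (IH (q @: X) q).
  - have := leq_imset_card q X; rewrite leq_eqVlt (negPf ninj) /= => lt.
    by rewrite -ltnS; exact: leq_trans lt hX.
  - have /set0Pn [x xX] := nX; apply/set0Pn; exists (q x); exact: imset_f.
  - move=> b /imsetP [x xX ->]; have /andP [qx Rx] := hq x xX.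
    by rewrite imset_f //; case/andP: (hq _ qx).
have surj : forall a, a \in X -> exists2 b, b \in X & q b = a.
  have eqX : q @: X = X.
    apply/eqP; rewrite eqEcard card_in_imset // leqnn andbT.
    by apply/subsetP => y /imsetP [x xX ->]; case/andP: (hq x xX).
  by move=> a; rewrite -{1}eqX => /imsetP [b bX ->]; exists b.
case: (boolP [exists a, exists b, [&& a \in X, b \in X, R a b & q b != a]]) =>
    [/existsP [a /existsP [b /and4P [aX bX Rab qba]]] | nochord].
  have /andP [qbX Rqb] := hq b bX.
  apply: (IH (X :\ q b) (fun x => if x == b then a else q x)).
  - by rewrite (cardsD1 (q b)) qbX add1n ltnS in hX.
  - apply/set0Pn; exists b; rewrite in_setD1 bX andbT.
    by case/andP: Rqb => ne _; rewrite eq_sym.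
  - move=> x; rewrite in_setD1 => /andP [xqb xX].
    case: eqP => [-> | /eqP xb].
      by rewrite !inE aX Rab andbT eq_sym qba.
    have /andP [qxX Rqx] := hq x xX.
    rewrite !inE qxX Rqx !andbT; apply/negP => /eqP e.
    by move/negP: xb; apply; apply/eqP; apply: inj.
have chordfree : forall a b, a \in X -> b \in X -> R a b -> q b = a.
  move=> a b aX bX Rab; apply/eqP; apply/negPn/negP => nq.
  move/negP: nochord; apply; apply/existsP; exists a; apply/existsP; exists b.
  by rewrite aX bX Rab nq.
pose qinv a := odflt a [pick b in X | q b == a].
have qinvP : forall a, a \in X -> (qinv a \in X) && (q (qinv a) == a).
  move=> a aX; rewrite /qinv; case: pickP => [b /andP [bX /eqP qb] | none] /=.
    by rewrite bX qb eqxx.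
  have [b bX qb] := surj a aX; by have := none b; rewrite bX qb eqxx.
pose e a := if a \in X then odflt (t a) [pick y | (c y == a) && (lam (qinv a) y != 0)] else t a.
have eP : forall a, a \in X -> (c (e a) == a) && (lam (qinv a) (e a) != 0).
  move=> a aX; rewrite /e aX; case: pickP => [y hy | none] //=.
  have /andP [qiX /eqP qq] := qinvP a aX; have /andP [_ Rq] := hq _ qiX.
  rewrite qq in Rq; case/andP: Rq => _ /existsP [y hy].
  by have := none y; rewrite hy.
have ce : forall a, c (e a) = a.
  move=> a; case: (boolP (a \in X)) => aX; first by case/andP: (eP a aX) => /eqP.
  by rewrite /e (negPf aX) ct.
have Rchord : forall a b, a != b -> lam b (e a) != 0 -> R a b.
  move=> a b ab nz; rewrite /R ab; apply/existsP; exists (e a); by rewrite ce eqxx nz.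
apply: (H2 (Y := X) (e := e) nX ce).
- move=> b bX; have /andP [qbX Rqb] := hq b bX.
  apply: (two_ones (z0 := b) (z1 := q b)) => //.
  + by case/andP: Rqb; rewrite eq_sym.
  + by have := H1 (e b); rewrite ce.
  + have /andP [qiX /eqP qq] := qinvP (q b) qbX.
    have qib : qinv (q b) = b by apply: inj.
    apply: F2_neq0; have /andP [_ ] := eP (q b) qbX; by rewrite qib.
  + move=> z zX zb zqb; apply/eqP; apply/negPn/negP => nz.
    have := chordfree z b zX bX (Rchord z b zb nz) => eq.
    by move/negP: zqb; apply; rewrite eq.
- move=> a aX; have /andP [qiX /eqP qq] := qinvP a aX.
  have Raq : R a (qinv a) by have /andP [_] := hq _ qiX; rewrite qq.
  apply: (two_ones (z0 := a) (z1 := qinv a)) => //.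
  + by case/andP: Raq.
  + by have := H1 (e a); rewrite ce.
  + apply: F2_neq0; by case/andP: (eP a aX).
  + move=> b bX ba bqa; apply/eqP; apply/negPn/negP => nz.
    have := chordfree a b aX bX (Rchord a b ltac:(by rewrite eq_sym) nz) => eq.
    move/negP: bqa; apply; apply/eqP; apply: inj => //; by rewrite eq qq.
Qed.

Lemma core (b0 : 'I_k) : exists b, forall y, c y != b -> lam b y = 0.
Proof.
case: (boolP [exists b, [forall y, (c y != b) ==> (lam b y == 0)]]) =>
    [/existsP [b /forallP Hb] | none].
  by exists b => y cy; apply/eqP; exact: (implyP (Hb y) cy).
exfalso.
have hin : forall b, exists a, R a b.
  move=> b; move: none; rewrite negb_exists => /forallP /(_ b).
  rewrite negb_forall => /existsP [y]; rewrite negb_imply => /andP [cy ly].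
  exists (c y); rewrite /R cy; apply/existsP; exists y; by rewrite eqxx ly.
pose q b := odflt b [pick a | R a b].
apply: (@no_cycle #|[set: 'I_k]| setT q) => //.
  by apply/set0Pn; exists b0; rewrite inE.
move=> b _; rewrite inE /= /q; case: pickP => [a Ra | none'] //=.
have [a Ra] := hin b; by have := none' a; rewrite Ra.
Qed.
End Core.

Section Part1.
Variables (S : finType) (m : nat) (v : S -> 'rV['F_2]_m) (M : matroid S).
Hypothesis hv : forall A : {set S}, indep M A = free [seq v x | x in A].

Lemma part1 (c : S -> 'I_(mrank M)) : (0 < #|S|)%N -> coloring c ->
  (exists C, circuit M C /\ rainbow c C) \/ (exists D, cut M D /\ monochromatic c D).
Proof.
move=> hS col; have /card_gt0P [x0 _] := hS.
case: (classic (exists C, circuit M C /\ rainbow c C)) => [h|nrc]; [by left|right].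
have rbI : forall A, rainbow c A -> indep M A.
  move=> A rA; apply/negPn/negP => nA.
  case: (minset_exists (P := fun X => ~~ indep M X) nA) => C minC sCA.
  apply: nrc; exists C; split => //.
  move=> x y xC yC; apply: rA; exact: (subsetP sCA).
pose t a := odflt x0 [pick x | c x == a].
have ct : forall a, c (t a) = a.
  move=> a; rewrite /t; case: pickP => [x /eqP //|none].
  by have [x cx] := col a; have := none x; rewrite cx eqxx.
have tr_basis : forall e, (forall a, c (e a) = a) -> basis M (e @: [set: 'I_(mrank M)]).
  move=> e ce; apply: maxsize_basis.
    apply: rbI => x y /imsetP [a _ ->] /imsetP [b _ ->]; by rewrite !ce => ->.
  rewrite card_in_imset ?cardsT ?card_ord // => a b _ _ eab.
  by rewrite -(ce a) -(ce b) eab.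
set T0 := t @: [set: 'I_(mrank M)].
have bT0 : basis M T0 by apply: tr_basis.
pose ka y := coef v T0 (v y).
have hk : forall y, supp T0 (ka y) /\ v y = comb v (ka y).
  by move=> y; apply: basis_coef.
have inT0 : forall x, x \in T0 -> x = t (c x).
  by move=> x /imsetP [j _ ->]; rewrite ct.
pose lam b y := ka y (t b).
have H1 : forall y, lam (c y) y = 1.
  move=> y; apply: F2_neq0; apply/negP => /eqP z; rewrite /lam in z.
  pose a := c y.
  pose f := fun i => if i == a then y else t i.
  have cf : forall i, c (f i) = i.
    by move=> i; rewrite /f; case: eqP => [->|] //.
  have iTf := maxsetp (tr_basis f cf).
  have S1 : supp (f @: [set: 'I_(mrank M)]) (fun x => ka y x - (x == y)%:R).
    move=> x xT; have xy : x != y.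
      apply/negP => /eqP exy; move/negP: xT; apply; rewrite exy.
      by apply/imsetP; exists a; rewrite // /f eqxx.
    rewrite (negPf xy) subr0.
    case: (boolP (x \in T0)) => xT0; last by rewrite (proj1 (hk y)).
    rewrite (inT0 _ xT0); case: (eqVneq (c x) a) => [->|ne]; first exact: z.
    move/negP: xT; case; apply/imsetP; exists (c x) => //.
    by rewrite /f (negPf ne) -inT0.
  have S2 : comb v (fun x => ka y x - (x == y)%:R) = 0.
    by rewrite -comb_sub comb_delta -(proj2 (hk y)) subrr.
  have kyy : ka y y = 0.
    case: (boolP (y \in T0)) => yT0; last by rewrite (proj1 (hk y)).
    by rewrite {2}(inT0 _ yT0).
  have := free_coef hv iTf S1 S2 y; rewrite kyy eqxx sub0r => /eqP.
  by rewrite oppr_eq0 oner_eq0.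
have H2 : forall (Y : {set 'I_(mrank M)}) (e : 'I_(mrank M) -> S), Y != set0 ->
    (forall a, c (e a) = a) ->
    (forall b, b \in Y -> \sum_(a in Y) lam b (e a) = 0) ->
    (forall a, a \in Y -> \sum_(b in Y) lam b (e a) = 0) -> False.
  move=> Y e nY ce csum _.
  pose f := fun i => if i \in Y then e i else t i.
  have cf : forall i, c (f i) = i by move=> i; rewrite /f; case: ifP.
  have iTf := maxsetp (tr_basis f cf).
  pose k x := \sum_(a in Y) ((x == e a)%:R - ka (e a) x).
  have eY : forall x a, a \in Y -> x \notin f @: [set: 'I_(mrank M)] -> (x == e a) = false.
    move=> x a aY xT; apply/negP => /eqP exa; move/negP: xT; apply; apply/imsetP.
    by exists a => //; rewrite /f aY.
  have S1 : supp (f @: [set: 'I_(mrank M)]) k.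
    move=> x xT; rewrite /k (eq_bigr (fun a => - ka (e a) x)); last first.
      by move=> a aY; rewrite eY // sub0r.
    rewrite sumrN; apply/eqP; rewrite oppr_eq0; apply/eqP.
    case: (boolP (x \in T0)) => xT0; last by apply: big1 => a _; rewrite (proj1 (hk _)).
    rewrite (inT0 _ xT0).
    case: (boolP (c x \in Y)) => cY; first exact: csum.
    move/negP: xT; case; apply/imsetP; exists (c x) => //.
    by rewrite /f (negPf cY) -inT0.
  have S2 : comb v k = 0.
    rewrite /k -(@comb_sum _ _ v _ (fun a => a \in Y) (fun a x => (x == e a)%:R - ka (e a) x)).
    by rewrite big1 // => a _; rewrite -comb_sub comb_delta -(proj2 (hk _)) subrr.
  have /set0Pn [a0 a0Y] := nY.
  have k1 : k (e a0) = 1.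
    rewrite /k sumrB.
    have -> : \sum_(a in Y) ((e a0 == e a)%:R : 'F_2) = 1.
      rewrite (bigD1 a0) //= eqxx big1 ?addr0 // => a /andP [_ ne].
      have -> // : (e a0 == e a) = false.
      apply/negP => /eqP h; move/negP: ne; apply; by rewrite -(ce a) -h ce.
    have -> : \sum_(a in Y) ka (e a) (e a0) = 0.
      case: (boolP (e a0 \in T0)) => eT0; last by apply: big1 => a _; rewrite (proj1 (hk _)).
      rewrite (inT0 _ eT0) ce; exact: csum.
    by rewrite subr0.
  by have := free_coef hv iTf S1 S2 (e a0); rewrite k1 => /eqP; rewrite oner_eq0.
have [b hb] := @core _ _ c lam t ct H1 H2 (c x0).
set Cb := [set x | c x == b].
have mC : meets_all_bases M Cb.
  apply/forallP => B'; apply/implyP => bB'; apply/negP => /eqP emp.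
  have [sB eB] := basis_coef hv (t b) bB'.
  set kp := coef v B' (v (t b)) in sB eB.
  have eB2 : v (t b) = comb v (fun x => \sum_y kp y * ka y x).
    rewrite -comb_scale eB {1}/comb; apply: eq_bigr => y _; by rewrite -(proj2 (hk y)).
  have := coef_uniq hv (maxsetp bT0) (k1 := fun x => (x == t b)%:R)
            (k2 := fun x => \sum_y kp y * ka y x) _ _ _ (t b).
  rewrite eqxx big1.
  - move=> H; have nz : (true%:R : 'F_2) != 0 by [].
    apply: (negP nz); apply/eqP; apply: H.
    + move=> x xT; case: eqP => // ex; move/negP: xT; case; rewrite ex.
      by apply/imsetP; exists b.
    + by move=> x xT; apply: big1 => y _; rewrite (proj1 (hk y)) // mulr0.
    + by rewrite comb_delta.
  - move=> y _; case: (boolP (y \in B')) => yB; last by rewrite sB // mul0r.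
    have cyb : c y != b.
      apply/negP => /eqP cy.
      have : y \in Cb :&: B' by rewrite !inE cy eqxx yB.
      by rewrite emp inE.
    by have := hb y cyb; rewrite /lam => ->; rewrite mulr0.
case: (minset_exists mC) => D cutD sD; exists D; split => //.
move=> x y xD yD; have := subsetP sD x xD; have := subsetP sD y yD.
by rewrite !inE => /eqP -> /eqP ->.
Qed.
End Part1.

Section Part2.
Variables (S : finType) (m : nat) (v : S -> 'rV['F_2]_m) (M : matroid S).
Hypothesis hv : forall A : {set S}, indep M A = free [seq v x | x in A].

Lemma part2 (c : S -> 'I_(#|S| - mrank M)) : (0 < #|S|)%N -> coloring c ->
  (exists D, cut M D /\ rainbow c D) \/ (exists C, circuit M C /\ monochromatic c C).
Proof.
move=> hS col; have /card_gt0P [x0 _] := hS.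
case: (classic (exists D, cut M D /\ rainbow c D)) => [h|nrc]; [by left|right].
case: (classic (exists C, circuit M C /\ monochromatic c C)) => [//|nmc]; exfalso.
have clI : forall b, indep M [set x | c x == b].
  move=> b; apply/negPn/negP => nA.
  case: (minset_exists (P := fun X => ~~ indep M X) nA) => C minC sCA.
  apply: nmc; exists C; split => //.
  move=> x y xC yC; have := subsetP sCA x xC; have := subsetP sCA y yC.
  by rewrite !inE => /eqP -> /eqP ->.
have rbN : forall A, rainbow c A -> ~~ meets_all_bases M A.
  move=> A rA; apply/negP => mA.
  case: (minset_exists mA) => D cD sDA.
  apply: nrc; exists D; split => //.
  move=> x y xD yD; apply: rA; exact: (subsetP sDA).
pose t a := odflt x0 [pick x | c x == a].
have ct : forall a, c (t a) = a.
  move=> a; rewrite /t; case: pickP => [x /eqP //|none].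
  by have [x cx] := col a; have := none x; rewrite cx eqxx.
have tinj : forall a b, (t a == t b) = (a == b).
  move=> a b; apply/eqP/eqP => [e|-> //]; by rewrite -(ct a) e ct.
have tr_cobasis : forall e, (forall a, c (e a) = a) ->
    basis M (~: (e @: [set: 'I_(#|S| - mrank M)])).
  move=> e ce.
  have rX : rainbow c (e @: [set: 'I_(#|S| - mrank M)]).
    by move=> x y /imsetP [a _ ->] /imsetP [b _ ->]; rewrite !ce => ->.
  move: (rbN _ rX); rewrite negb_forall => /existsP [B].
  rewrite negb_imply negbK => /andP [bB /eqP emp].
  have sB : B \subset ~: (e @: [set: 'I_(#|S| - mrank M)]).
    apply/subsetP => x xB; rewrite inE; apply/negP => xX.
    have : x \in e @: [set: 'I_(#|S| - mrank M)] :&: B by rewrite inE xX xB.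
    by rewrite emp inE.
  have cX : #|e @: [set: 'I_(#|S| - mrank M)]| = (#|S| - mrank M)%N.
    rewrite card_in_imset ?cardsT ?card_ord // => a b _ _ eab.
    by rewrite -(ce a) -(ce b) eab.
  have cC : #|~: (e @: [set: 'I_(#|S| - mrank M)])| = mrank M.
    have := cardsC (e @: [set: 'I_(#|S| - mrank M)]); rewrite cX => h.
    have := mrank_le_card M; lia.
  suff -> : ~: (e @: [set: 'I_(#|S| - mrank M)]) = B by [].
  apply/eqP; rewrite eq_sym eqEcard sB cC (basis_size bB) leqnn.
  done.
set T0 := t @: [set: 'I_(#|S| - mrank M)].
set B0 := ~: T0.
have bB0 : basis M B0 by apply: tr_cobasis.
have tT0 : forall a, t a \in T0 by move=> a; apply/imsetP; exists a.
have tB0 : forall a, t a \notin B0 by move=> a; rewrite inE negbK.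
have inT0 : forall x, x \in T0 -> x = t (c x).
  by move=> x /imsetP [j _ ->]; rewrite ct.
pose ka b := coef v B0 (v (t b)).
have hk : forall b, supp B0 (ka b) /\ v (t b) = comb v (ka b).
  by move=> b; apply: basis_coef.
have ka_t : forall b a, ka b (t a) = 0 by move=> b a; rewrite (proj1 (hk b)).
pose lam b y := if y \in T0 then (t b == y)%:R else ka b y.
have H1 : forall y, lam (c y) y = 1.
  move=> y; rewrite /lam; case: ifP => yT0.
    by rewrite {2}(inT0 _ yT0) eqxx.
  apply: F2_neq0; apply/negP => /eqP z.
  pose a := c y.
  pose f := fun i => if i == a then y else t i.
  have cf : forall i, c (f i) = i.
    by move=> i; rewrite /f; case: eqP => [->|] //.
  have iB := maxsetp (tr_cobasis f cf).
  have S1 : supp (~: (f @: [set: 'I_(#|S| - mrank M)])) (fun x => (x == t a)%:R - ka a x).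
    move=> x; rewrite inE negbK => /imsetP [i _ ->]; rewrite /f.
    case: ifP => [_|/negbT ia].
      have -> : (y == t a) = false by apply/negP => /eqP e; move: yT0; rewrite e tT0.
      by rewrite z subr0.
    by rewrite tinj (negPf ia) ka_t subr0.
  have S2 : comb v (fun x => (x == t a)%:R - ka a x) = 0.
    by rewrite -comb_sub comb_delta -(proj2 (hk a)) subrr.
  have := free_coef hv iB S1 S2 (t a); rewrite eqxx ka_t subr0 => /eqP.
  by rewrite oner_eq0.
have H2 : forall (Y : {set 'I_(#|S| - mrank M)}) (e : 'I_(#|S| - mrank M) -> S), Y != set0 ->
    (forall a, c (e a) = a) ->
    (forall b, b \in Y -> \sum_(a in Y) lam b (e a) = 0) ->
    (forall a, a \in Y -> \sum_(b in Y) lam b (e a) = 0) -> False.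
  move=> Y e nY ce _ rsum.
  have sum1 : forall a, a \in Y -> \sum_(b in Y) ((t b == t a)%:R : 'F_2) = 1.
    move=> a aY; rewrite (bigD1 a) //= eqxx big1 ?addr0 // => b /andP [_ ne].
    by rewrite tinj (negPf ne).
  have eT0 : forall a, a \in Y -> e a \notin T0.
    move=> a aY; apply/negP => eT.
    have := rsum a aY; rewrite /lam eT (inT0 _ eT) ce sum1 //.
  pose f := fun i => if i \in Y then e i else t i.
  have cf : forall i, c (f i) = i by move=> i; rewrite /f; case: ifP.
  have iB := maxsetp (tr_cobasis f cf).
  pose k x := \sum_(b in Y) ((x == t b)%:R - ka b x).
  have S1 : supp (~: (f @: [set: 'I_(#|S| - mrank M)])) k.
    move=> x; rewrite inE negbK => /imsetP [i _ ->]; rewrite /f /k.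
    case: ifP => iY.
      have := rsum i iY; rewrite /lam (negPf (eT0 i iY)) => hs.
      rewrite sumrB hs subr0; apply: big1 => b _.
      have -> // : (e i == t b) = false.
      by apply/negP => /eqP h; move: (eT0 i iY); rewrite h tT0.
    apply: big1 => b bY; rewrite tinj ka_t subr0.
    have -> // : (i == b) = false.
    by apply/negP => /eqP h; move: iY; rewrite h bY.
  have S2 : comb v k = 0.
    rewrite /k -(@comb_sum _ _ v _ (fun a => a \in Y) (fun b x => (x == t b)%:R - ka b x)).
    by rewrite big1 // => b _; rewrite -comb_sub comb_delta -(proj2 (hk _)) subrr.
  have /set0Pn [b0 b0Y] := nY.
  have := free_coef hv iB S1 S2 (t b0); rewrite /k sumrB.
  under eq_bigr => b _ do rewrite (eq_sym (t b0)).
  rewrite sum1 // big1 ?subr0 // => b _; by rewrite ka_t.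
have [b hb] := @core _ _ c lam t ct H1 H2 (c x0).
have S1 : supp [set x | c x == b] (fun x => (x == t b)%:R - ka b x).
  move=> x; rewrite inE => cxb.
  have -> : (x == t b) = false.
    by apply/negP => /eqP h; move: cxb; rewrite h ct eqxx.
  case: (boolP (x \in T0)) => xT0; last first.
    by have := hb x cxb; rewrite /lam (negPf xT0) => ->; rewrite subr0.
  by rewrite (proj1 (hk b)) ?subr0 // inE negbK.
have S2 : comb v (fun x => (x == t b)%:R - ka b x) = 0.
  by rewrite -comb_sub comb_delta -(proj2 (hk b)) subrr.
have := free_coef hv (clI b) S1 S2 (t b); rewrite eqxx ka_t subr0 => /eqP.
by rewrite oner_eq0.
Qed.
End Part2.

Close Scope ring_scope.

Theorem theorem1 (S : finType) (M : matroid S) :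
  0 < #|S| -> binary M -> loopless M ->
  (forall c : S -> 'I_(mrank M), coloring c ->
     (exists C, circuit M C /\ rainbow c C) \/
     (exists D, cut M D /\ monochromatic c D)) /\
  (forall c : S -> 'I_(#|S| - mrank M), coloring c ->
     (exists D, cut M D /\ rainbow c D) \/
     (exists C, circuit M C /\ monochromatic c C)).
Proof.
move=> hS [m [v hv]] _; split => c col.
  exact: (part1 hv hS col).
exact: (part2 hv hS col).
Qed.
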